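(* Let $n\geqslant 2$, $N=\{1,\ldots,n\}$ and $\alpha\in\mathbb{R}$. Write $\mathscr{BG}_\alpha(n)=\alpha u_{\{n\}}+\mathscr{C}_\alpha(n)$, where $\mathscr{C}_\alpha(n)=\{v\in\mathbb{R}^{2^N\setminus\{\varnothing,N\}}:\sum_{S\in\mathscr{B}}\lambda^{\mathscr{B}}_Sv(S)\leqslant 0\ \forall \mathscr{B}\in\mathfrak{B}^*(n)\}$, and $\mathscr{C}_\alpha(n)=\mathsf{Lin}(\mathscr{C}_\alpha(n))\oplus\mathscr{C}^0_\alpha(n)$, where $\mathsf{Lin}$ denotes the lineality space and $\mathscr{C}^0_\alpha(n)$ consists of the elements of $\mathscr{C}_\alpha(n)$ whose coordinates for $\{1\},\ldots,\{n-1\}$ are zero. Then the extremal rays of $\mathscr{BG}_\alpha(n)$ (in this decomposition) are: (i) the $2n-2$ rays $w_1,\ldots,w_{n-1},-w_1,\ldots,-w_{n-1}$ of the lineality space, where $w_i=\sum_{S\ni i,S\not\ni n}\delta_S-\sum_{S\not\ni i,S\ni n}\delta_S$; (ii) the $2^n-n-2$ rays $r_S=-\delta_S$ for $S\subsetneq N$, $|S|>1$; (iii) the $n$ rays $r_i=\sum_{S\ni i,\,S\not\ni n,\,|S|>1}\delta_S-\sum_{S\not\ni i,\,S\ni n}\delta_S$ for $i\in N\setminus\{n\}$, and $r_n=-\delta_{\{n\}}$. This yields in total $2^n+2n-4$ extremal rays.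
   Context: A game on $N$ is a map $v:2^N\to\mathbb{R}$ with $v(\varnothing)=0$. For nonempty $S$, $\delta_S(T)=1$ if $T=S$ and $0$ otherwise; $u_S(T)=1$ if $T\supseteq S$ and $0$ otherwise (all restricted to coordinates $T\neq\varnothing,N$). A collection $\mathscr{B}$ of nonempty subsets of $N$ is balanced if there exist positive weights $(\lambda_S)_{S\in\mathscr{B}}$ with $\sum_{S\in\mathscr{B},S\ni i}\lambda_S=1$ for all $i$; minimal balanced if no proper subcollection is balanced, with unique weights $\lambda^{\mathscr{B}}_S$. $\mathfrak{B}^*(n)$ is the set of minimal balanced collections on $N$ other than $\{N\}$. $\mathscr{BG}_\alpha(n)$ is the set of games with $v(N)=\alpha$ and $\sum_{S\in\mathscr{B}}\lambda^{\mathscr{B}}_S v(S)\leqslant\alpha$ for all $\mathscr{B}\in\mathfrak{B}^*(n)$, viewed in $\mathbb{R}^{2^N\setminus\{\varnothing,N\}}$. *)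

(* Defs.v *)
From HB Require Import structures.
From mathcomp Require Import all_boot all_order all_algebra.
From mathcomp Require Import reals.
Set Implicit Arguments. Unset Strict Implicit. Unset Printing Implicit Defensive.
Import Order.TTheory GRing.Theory Num.Theory.
Local Open Scope ring_scope.

(* Players N = {1,...,n} are encoded as 'I_n; player n is the ordinal n.-1. *)
Lemma last_player_lt (n : nat) : (1 < n)%N -> (n.-1 < n)%N.
Proof. by case: n. Qed.

Definition lastp (n : nat) (hn : (1 < n)%N) : 'I_n := Ordinal (last_player_lt hn).

Notation vec R n := {ffun {set 'I_n} -> R^o}.

Section Games.
Variables (R : realType) (n : nat).

(* Vectors of R^{2^N \ {emptyset, N}} are encoded as finite functions on
   {set 'I_n} whose coordinates at set0 and setT are 0. *)
Local Notation vec := {ffun {set 'I_n} -> R^o}.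

Definition restricted (x : vec) : Prop := x set0 = 0 /\ x setT = 0.

Definition balancing_weights (B : {set {set 'I_n}}) (lam : {set 'I_n} -> R) : Prop :=
  (forall S, S \in B -> 0 < lam S) /\
  (forall i : 'I_n, \sum_(S in B | i \in S) lam S = 1).

Definition balanced (B : {set {set 'I_n}}) : Prop :=
  (forall S, S \in B -> S != set0) /\ exists lam, balancing_weights B lam.

Definition minimal_balanced (B : {set {set 'I_n}}) : Prop :=
  balanced B /\ forall B' : {set {set 'I_n}}, B' \proper B -> ~ balanced B'.

Definition Bstar (B : {set {set 'I_n}}) : Prop :=
  minimal_balanced B /\ B != [set setT].

Definition game_of (alpha : R) (x : vec) : vec :=
  [ffun T : {set 'I_n} => if T == setT then alpha else if T == set0 then 0 else x T].

(* BG_alpha(n), viewed in R^{2^N \ {emptyset, N}}.  The weights lambda^B are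
   unique for minimal balanced B; we quantify over all balancing weights. *)
Definition BG (alpha : R) (x : vec) : Prop :=
  restricted x /\
  forall B lam, Bstar B -> balancing_weights B lam ->
    \sum_(S in B) lam S * game_of alpha x S <= alpha.

Definition Ccone (x : vec) : Prop :=
  restricted x /\
  forall B lam, Bstar B -> balancing_weights B lam ->
    \sum_(S in B) lam S * x S <= 0.

Definition Lin (K : vec -> Prop) (x : vec) : Prop := K x /\ K (- x).

Definition extreme_ray (K : vec -> Prop) (x : vec) : Prop :=
  K x /\ x != 0 /\
  forall y z, K y -> K z -> x = y + z ->
    exists a b : R, [/\ 0 <= a, 0 <= b, y = a *: x & z = b *: x].

Variable p : 'I_n. (* the player n *)

Definition C0 (x : vec) : Prop :=
  Ccone x /\ forall i : 'I_n, i != p -> x [set i] = 0.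

Definition delta (S : {set 'I_n}) : vec :=
  [ffun T : {set 'I_n} => ((T == S) && (T != set0) && (T != setT))%:R].

Definition u_last : vec :=
  [ffun T : {set 'I_n} => ((p \in T) && (T != setT))%:R].

Definition w (i : 'I_n) : vec :=
  [ffun T : {set 'I_n} => ((i \in T) && (p \notin T))%:R - ((i \notin T) && (p \in T))%:R].

Definition r_player (i : 'I_n) : vec :=
  if i == p then - delta [set p]
  else [ffun T : {set 'I_n} => ((i \in T) && (p \notin T) && (1 < #|T|)%N)%:R
                  - ((i \notin T) && (p \in T))%:R].

Definition gen (k : {set 'I_n} + 'I_n) : vec :=
  match k with inl A => - delta A | inr i => r_player i end.

Definition valid_index (k : {set 'I_n} + 'I_n) : bool :=
  match k with inl A => (1 < #|A|)%N && (A != setT) | inr _ => true end.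

End Games.

(* Main.v *)
Require Import Defs.
From HB Require Import structures.
From mathcomp Require Import all_boot all_order all_algebra.
From mathcomp Require Import reals ring lra zify.
From Stdlib Require Import Classical.
Import Order.TTheory GRing.Theory Num.Theory.
Local Open Scope ring_scope.
Set Implicit Arguments. Unset Strict Implicit. Unset Printing Implicit Defensive.

Section Farkas.
Variables (R : realFieldType) (V : lmodType R).

Definition linf (f : V -> R) := forall (c : R) (u v : V), f (c *: u + v) = c * f u + f v.

Lemma linf0 f : linf f -> f 0 = 0.
Proof.
move=> hf; have h := hf 1 0 0; rewrite scaler0 addr0 mul1r in h; lra.
Qed.

Lemma linfZ f c u : linf f -> f (c *: u) = c * f u.
Proof. by move=> hf; rewrite -[c *: u]addr0 hf linf0 // addr0. Qed.

Lemma linfD f u v : linf f -> f (u + v) = f u + f v.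
Proof. by move=> hf; rewrite -[u]scale1r hf mul1r scale1r. Qed.

Lemma farkas (I : eqType) (s : seq I) : forall (F : I -> V -> R) (g : V -> R),
  uniq s -> (forall i, linf (F i)) -> linf g ->
  (exists x, (forall i, i \in s -> F i x <= 0) /\ 0 < g x) \/
  (exists lam : I -> R, (forall i, 0 <= lam i) /\
       forall z, g z = \sum_(i <- s) lam i * F i z).
Proof.
elim: s => [|i0 s IH] F g Hu HF Hg.
  case: (classic (exists x, g x != 0)) => [[x gx]|ng].
    left; case: (ltrgtP (g x) 0) => h; last by rewrite h eqxx in gx.
      exists (- x); split => //; rewrite -scaleN1r linfZ //; lra.
    by exists x.
  right; exists (fun _ => 0); split => // z; rewrite big_nil.
  by apply/eqP; apply/negPn/negP => h; apply: ng; exists z.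
move: Hu => /= /andP [i0s Hu].
have [[x [Fx gx]]|[lam [lam0 glam]]] := IH F g Hu HF Hg; last first.
  right; exists (fun i => if i == i0 then 0 else lam i); split.
    by move=> i; case: ifP.
  move=> z; rewrite big_cons eqxx mul0r add0r glam; apply: eq_big_seq => i iS.
  by case: eqP => // ei; move: i0s; rewrite -ei iS.
case: (lerP (F i0 x) 0) => f0le.
  left; exists x; split => // i; rewrite in_cons => /orP [/eqP -> //|]; exact: Fx.
set f0 := F i0 x in f0le.
have f0n : f0 != 0 by rewrite gt_eqF.
pose F' i v := F i v - (F i x / f0) * F i0 v.
pose g' v := g v - (g x / f0) * F i0 v.
have HF' i : linf (F' i).
  move=> c u v; rewrite /F' !(HF i) (HF i0); ring.
have Hg' : linf g'.
  move=> c u v; rewrite /g' !Hg (HF i0); ring.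
have [[y [Fy gy]]|[lam [lam0 glam]]] := IH F' g' Hu HF' Hg'.
  left; exists ((- (F i0 y / f0)) *: x + y); split.
    move=> i; rewrite in_cons => /orP [/eqP ->|iS].
      by rewrite (HF i0) -/f0 mulNr divfK // addNr.
    by rewrite (HF i); have := Fy i iS; rewrite /F'; lra.
  by rewrite Hg; move: gy; rewrite /g'; lra.
right; exists (fun i => if i == i0 then (g x - \sum_(j <- s) lam j * F j x) / f0 else lam i).
split.
  move=> i; case: ifP => // _; apply: divr_ge0; last by apply: ltW.
  have : \sum_(j <- s) lam j * F j x <= 0.
    rewrite big_seq; apply: sumr_le0 => j js; apply: mulr_ge0_le0 => //; exact: Fx.
  lra.
move=> z; rewrite big_cons eqxx.
have e : \sum_(i <- s) (if i == i0 then (g x - \sum_(j <- s) lam j * F j x) / f0 else lam i) * F i z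
        = \sum_(i <- s) lam i * F i z.
  by apply: eq_big_seq => i iS; case: eqP => // ei; move: i0s; rewrite -ei iS.
rewrite e.
have e2 := glam z; rewrite /g' /F' in e2.
have e3 : \sum_(i <- s) lam i * (F i z - F i x / f0 * F i0 z) =
   \sum_(i <- s) lam i * F i z - (\sum_(i <- s) lam i * F i x) * (F i0 z / f0).
  by rewrite mulr_suml -sumrB; apply: eq_bigr => i _; ring.
rewrite e3 in e2.
have : g z = g x / f0 * F i0 z + (\sum_(i <- s) lam i * F i z - (\sum_(i <- s) lam i * F i x) * (F i0 z / f0)).
  by rewrite -e2; ring.
by move=> ->; field.
Qed.

End Farkas.

Section G.
Variables (R : realType) (n : nat) (p : 'I_n).
Hypothesis hn : (1 < n)%N.
Local Notation vec := {ffun {set 'I_n} -> R^o}.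
Implicit Types (B : {set {set 'I_n}}) (S T : {set 'I_n}) (x y z l : vec) (lam : {set 'I_n} -> R).

Definition phi (B : {set {set 'I_n}}) (lam : {set 'I_n} -> R) (x : vec) :=
  \sum_(S in B) lam S * x S.

Lemma phiD B lam x y : phi B lam (x + y) = phi B lam x + phi B lam y.
Proof. by rewrite /phi -big_split; apply: eq_bigr => S _; rewrite ffunE mulrDr. Qed.

Lemma phiZ B lam c x : phi B lam (c *: x) = c * phi B lam x.
Proof. by rewrite /phi mulr_sumr; apply: eq_bigr => S _; rewrite ffunE /= /GRing.scale /=; ring. Qed.

Lemma phiN B lam x : phi B lam (- x) = - phi B lam x.
Proof. by rewrite /phi -sumrN; apply: eq_bigr => S _; rewrite ffunE mulrN. Qed.

Lemma phiB B lam x y : phi B lam (x - y) = phi B lam x - phi B lam y.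
Proof. by rewrite phiD phiN. Qed.

Lemma CconeE x : Ccone x <-> restricted x /\
   forall B lam, Bstar R B -> balancing_weights B lam -> phi B lam x <= 0.
Proof. by []. Qed.

Lemma Bstar_set0 B S : Bstar R B -> S \in B -> S != set0.
Proof. by move=> [[[h _] _] _]; apply: h. Qed.

Lemma Bstar_setT B : Bstar R B -> setT \notin B.
Proof.
move=> [[[hB0 hBl] minB] neq]; apply/negP => hT.
apply: (minB [set setT]).
  by rewrite properEneq eq_sym neq sub1set hT.
split; first by move=> S; rewrite in_set1 => /eqP ->; apply: hB0.
exists (fun _ => 1); split => // i.
rewrite (eq_bigl (pred1 setT)) ?big_pred1_eq // => S /=.
by rewrite in_set1; case: eqP => // ->; rewrite in_setT.
Qed.

Lemma Bstar_valid B S : Bstar R B -> S \in B -> (S != set0) && (S != setT).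
Proof.
move=> hB hS; rewrite (Bstar_set0 hB hS) /=; apply/eqP => e.
by move: (Bstar_setT hB); rewrite -e hS.
Qed.

Lemma phi_add B lam (a : 'I_n -> R) : balancing_weights B lam ->
  \sum_(S in B) lam S * \sum_(i in S) a i = \sum_i a i.
Proof.
move=> [_ hl].
transitivity (\sum_(S in B) \sum_i (if i \in S then lam S * a i else 0)).
  by apply: eq_bigr => S _; rewrite mulr_sumr big_mkcond.
rewrite exchange_big; apply: eq_bigr => i _.
by rewrite -big_mkcondr -mulr_suml hl mul1r.
Qed.

Lemma core_Ccone (x : vec) (a : 'I_n -> R) : restricted x -> \sum_i a i = 0 ->
  (forall S, S != set0 -> S != setT -> x S <= \sum_(i in S) a i) -> Ccone x.
Proof.
move=> rx sa hx; split => // B lam hB hl.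
apply: (le_trans (y := \sum_(S in B) lam S * \sum_(i in S) a i)); last by rewrite (phi_add a hl) sa.
apply: ler_sum => S SB.
have /andP [h0 hT] := Bstar_valid hB SB.
by rewrite ler_pM2l ?hx //; case: hl => h _; apply: h.
Qed.

Lemma Ccone_addLin x l : Ccone x -> Lin (@Ccone R n) l -> Ccone (x + l).
Proof.
move=> [[x0 xT] hx] [[[l0 lT] hl] [_ hl']]; split.
  by split; rewrite ffunE ?x0 ?l0 ?xT ?lT addr0.
move=> B lam hB hw; change (phi B lam (x + l) <= 0); rewrite phiD.
have h1 : phi B lam l <= 0 := hl B lam hB hw.
have h2 : phi B lam (- l) <= 0 := hl' B lam hB hw.
have h3 : phi B lam x <= 0 := hx B lam hB hw.
rewrite phiN in h2; lra.
Qed.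

Lemma Lin_phi l B lam : Lin (@Ccone R n) l -> Bstar R B -> balancing_weights B lam ->
  phi B lam l = 0.
Proof.
move=> [[_ hl] [_ hl']] hB hw.
have h1 : phi B lam l <= 0 := hl B lam hB hw.
have h2 : phi B lam (- l) <= 0 := hl' B lam hB hw.
rewrite phiN in h2; lra.
Qed.

Lemma LinN l : Lin (@Ccone R n) l -> Lin (@Ccone R n) (- l).
Proof. by move=> [h1 h2]; split; rewrite ?opprK. Qed.

Lemma CconeZ c x : 0 <= c -> Ccone x -> Ccone (c *: x).
Proof.
move=> c0 [[x0 xT] hx]; split.
  by split; rewrite ffunE ?x0 ?xT /GRing.scale /= mulr0.
move=> B lam hB hw; change (phi B lam (c *: x) <= 0); rewrite phiZ.
apply: mulr_ge0_le0 => //; exact: hx.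
Qed.

Lemma CconeD x y : Ccone x -> Ccone y -> Ccone (x + y).
Proof.
move=> [[x0 xT] hx] [[y0 yT] hy]; split.
  by split; rewrite ffunE ?x0 ?xT ?y0 ?yT addr0.
move=> B lam hB hw; change (phi B lam (x + y) <= 0); rewrite phiD.
have h1 : phi B lam x <= 0 := hx B lam hB hw.
have h2 : phi B lam y <= 0 := hy B lam hB hw.
lra.
Qed.


Lemma part_Bstar B T0 : T0 \in B -> T0 != setT -> (forall S, S \in B -> S != set0) ->
  (forall i, exists2 S, S \in B & i \in S) ->
  (forall i S1 S2, S1 \in B -> S2 \in B -> i \in S1 -> i \in S2 -> S1 = S2) ->
  Bstar R B /\ balancing_weights B (fun _ => (1 : R)).
Proof.
move=> T0B T0T hne hcov huniq.
have hw : balancing_weights B (fun _ => (1 : R)).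
  split => // i; have [S SB iS] := hcov i.
  rewrite (eq_bigl (pred1 S)) ?big_pred1_eq // => S' /=.
  apply/andP/eqP => [[S'B iS']|->]; first exact: (huniq i).
  by split.
split => //; split; last first.
  by apply/eqP => e; move: T0B; rewrite e in_set1 (negbTE T0T).
split; first by split => //; exists (fun _ => 1).
move=> B' /properP [sub [S SB SnB']] [_ [mu [_ hmu]]].
have /set0Pn [i iS] := hne S SB.
have := hmu i; rewrite big_pred0 => [/esym/eqP|S']; first by rewrite oner_eq0.
apply/negP => /andP [S'B' iS'].
have S'B := subsetP sub _ S'B'.
have e := huniq i S' S S'B SB iS' iS.
by move: SnB'; rewrite -e S'B'.
Qed.

Definition PP T : {set {set 'I_n}} := T |: [set [set j] | j in ~: T].

Lemma PP_mem S T i : S \in PP T -> i \in S -> S = if i \in T then T else [set i].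
Proof.
rewrite in_setU1 => /orP [/eqP ->|/imsetP [j jT ->]]; first by move=> ->.
move=> /set1P ->; move: jT; rewrite in_setC => /negbTE -> //.
Qed.

Lemma PP_Bstar T : T != set0 -> T != setT ->
  Bstar R (PP T) /\ balancing_weights (PP T) (fun _ => (1 : R)).
Proof.
move=> T0 TT; apply: (part_Bstar (T0 := T)) => //.
- exact: setU11.
- move=> S; rewrite in_setU1 => /orP [/eqP -> //|/imsetP [j _ ->]].
  by apply/set0Pn; exists j; rewrite set11.
- move=> i; case iT: (i \in T); first by exists T; rewrite ?setU11.
  exists [set i]; last by rewrite set11.
  by rewrite in_setU1; apply/orP; right; apply: imset_f; rewrite in_setC iT.
- move=> i S1 S2 h1 h2 i1 i2.
  by rewrite (PP_mem h1 i1) (PP_mem h2 i2).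
Qed.

Lemma sumPP (f : {set 'I_n} -> R) T : T != set0 ->
  \sum_(S in PP T) f S = f T + \sum_(j in ~: T) f [set j].
Proof.
move=> /set0Pn [k kT]; rewrite big_setU1 /=.
  by rewrite big_imset //= => i j _ _; apply: set1_inj.
apply/imsetP => [[j jT e]]; move: kT jT; rewrite e !inE => /eqP <-.
by rewrite eqxx.
Qed.

Definition QQ T : {set {set 'I_n}} := T |: [set ~: T].

Lemma setC_neq0 T : T != setT -> ~: T != set0.
Proof. by move=> TT; apply/eqP => e; move: TT; rewrite -(setCK T) e setC0 eqxx. Qed.

Lemma QQ_neq T : T != set0 -> T != ~: T.
Proof.
move=> /set0Pn [k kT]; apply/eqP => e.
have h : k \in ~: T by rewrite -e.
by rewrite inE kT in h.
Qed.

Lemma QQ_Bstar T : T != set0 -> T != setT ->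
  Bstar R (QQ T) /\ balancing_weights (QQ T) (fun _ => (1 : R)).
Proof.
move=> T0 TT.
have hmem S i : S \in QQ T -> i \in S -> S = if i \in T then T else ~: T.
  rewrite in_setU1 in_set1 => /orP [] /eqP ->; first by move=> ->.
  by rewrite inE => /negbTE ->.
apply: (part_Bstar (T0 := T)) => //.
- exact: setU11.
- move=> S; rewrite in_setU1 in_set1 => /orP [] /eqP -> //; exact: setC_neq0.
- move=> i; case iT: (i \in T); first by exists T; rewrite ?setU11.
  by exists (~: T); rewrite ?in_setU1 ?in_set1 ?eqxx ?orbT // in_setC iT.
- by move=> i S1 S2 h1 h2 i1 i2; rewrite (hmem _ _ h1 i1) (hmem _ _ h2 i2).
Qed.

Lemma sumQQ (f : {set 'I_n} -> R) T : T != set0 ->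
  \sum_(S in QQ T) f S = f T + f (~: T).
Proof.
move=> T0; rewrite big_setU1 ?big_set1 //= in_set1; exact: QQ_neq.
Qed.

Lemma sumTC (f : 'I_n -> R) T : \sum_(i in T) f i + \sum_(i in ~: T) f i = \sum_i f i.
Proof.
rewrite [RHS](bigID (mem T)) /=; congr (_ + _); apply: eq_bigl => i //.
by rewrite in_setC.
Qed.

Lemma sum1_neq0 (p' : 'I_n) : [set p'] != set0.
Proof. by apply/set0Pn; exists p'; rewrite set11. Qed.

Lemma set1_neqT (p' : 'I_n) : [set p'] != setT.
Proof.
apply/eqP => e; have := cards1 p'; rewrite e cardsT card_ord => en.
by move: hn; rewrite en.
Qed.

Lemma Ccone_PP x T : Ccone x -> T != set0 -> T != setT ->
  x T + \sum_(j in ~: T) x [set j] <= 0.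
Proof.
move=> [_ hx] T0 TT; have [hB hw] := PP_Bstar T0 TT.
have := hx _ _ hB hw; rewrite (sumPP (fun S => 1 * x S) T0) !mul1r.
by under eq_bigr do rewrite mul1r.
Qed.

Lemma Ccone_QQ x T : Ccone x -> T != set0 -> T != setT -> x T + x (~: T) <= 0.
Proof.
move=> [_ hx] T0 TT; have [hB hw] := QQ_Bstar T0 TT.
by have := hx _ _ hB hw; rewrite (sumQQ (fun S => 1 * x S) T0) !mul1r.
Qed.

Lemma sum_sing_p (f : 'I_n -> R) : \sum_i f i = f p + \sum_(j in ~: [set p]) f j.
Proof.
rewrite (bigD1 p) //=; congr (_ + _); apply: eq_bigl => j.
by rewrite in_setC in_set1.
Qed.

Lemma sum_opp_sing x (A : {set 'I_n}) :
  \sum_(j in A) (- x) [set j] = - \sum_(j in A) x [set j].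
Proof. by rewrite -sumrN; apply: eq_bigr => j _; rewrite ffunE. Qed.

Lemma Lin_sum0 x : Lin (@Ccone R n) x -> \sum_i x [set i] = 0.
Proof.
move=> [h1 h2]; have a1 := Ccone_PP h1 (sum1_neq0 p) (set1_neqT p).
have a2 := Ccone_PP h2 (sum1_neq0 p) (set1_neqT p).
rewrite ffunE sum_opp_sing in a2; rewrite sum_sing_p; lra.
Qed.

Lemma Lin_add x : Lin (@Ccone R n) x -> forall T, x T = \sum_(i in T) x [set i].
Proof.
move=> hL T; have s0 := Lin_sum0 hL.
have [h1 h2] := hL; have [[x0 xT] _] := h1.
case: (eqVneq T set0) => [->|T0]; first by rewrite x0 big_set0.
case: (eqVneq T setT) => [->|TT].
  have -> : \sum_(i in [set: 'I_n]) x [set i] = \sum_i x [set i].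
    by apply: eq_bigl => i; rewrite in_setT.
  by rewrite xT s0.
have a1 := Ccone_PP h1 T0 TT; have a2 := Ccone_PP h2 T0 TT.
rewrite ffunE sum_opp_sing in a2; have := sumTC (fun i => x [set i]) T; rewrite s0; lra.
Qed.

Lemma w_val i T : w R p i T = (i \in T)%:R - (p \in T)%:R.
Proof. by rewrite ffunE; case: (i \in T); case: (p \in T); rewrite /= ?subrr. Qed.

Definition lin_sum (c : 'I_n -> R) : vec := \sum_(i | i != p) c i *: w R p i.
Definition acoef (c : 'I_n -> R) i := if i == p then - \sum_(j | j != p) c j else c i.

Lemma acoef_sum c : \sum_i acoef c i = 0.
Proof.
rewrite (bigD1 p) //= /acoef eqxx; apply/eqP; rewrite addrC subr_eq0; apply/eqP.
by apply: eq_bigr => i /negbTE ->.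
Qed.

Lemma lin_sumE c T : lin_sum c T = \sum_(i in T) acoef c i.
Proof.
rewrite /lin_sum sum_ffunE.
transitivity (\sum_(i | i != p) (c i * (i \in T)%:R) - (p \in T)%:R * \sum_(j | j != p) c j).
  rewrite mulr_sumr -sumrB; apply: eq_bigr => i _.
  by rewrite ffunE w_val /GRing.scale /=; ring.
rewrite [RHS]big_mkcond /= [RHS](bigD1 p) //=.
rewrite /acoef eqxx addrC; congr (_ + _).
  apply: eq_big => // i /negbTE ->; case: (i \in T); by rewrite ?mulr1 ?mulr0.
by case: (p \in T); rewrite ?mul1r ?mul0r ?oppr0.
Qed.

Lemma add_Ccone (a : 'I_n -> R) (x : vec) : \sum_i a i = 0 ->
  (forall T, x T = \sum_(i in T) a i) -> Ccone x.
Proof.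
move=> sa hx; apply: (core_Ccone (a := a)) => //.
  split; first by rewrite hx big_set0.
  rewrite hx; have -> : \sum_(i in [set: 'I_n]) a i = \sum_i a i.
    by apply: eq_bigl => i; rewrite in_setT.
  by rewrite sa.
by move=> S _ _; rewrite hx.
Qed.

Lemma Lin_lin_sum c : Lin (@Ccone R n) (lin_sum c).
Proof.
split.
  apply: (add_Ccone (acoef_sum c)) => T; exact: lin_sumE.
apply: (add_Ccone (a := fun i => - acoef c i)).
  by rewrite sumrN acoef_sum oppr0.
by move=> T; rewrite ffunE lin_sumE sumrN.
Qed.

Lemma Lin_iff x : Lin (@Ccone R n) x <-> exists c, x = lin_sum c.
Proof.
split; last by move=> [c ->]; exact: Lin_lin_sum.
move=> hL; exists (fun i => x [set i]); apply/ffunP => T.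
rewrite lin_sumE (Lin_add hL); apply: eq_bigr => i _; rewrite /acoef.
case: eqP => // ->; have := Lin_sum0 hL; rewrite (bigD1 p) //=.
move=> e; lra.
Qed.

Lemma lin_sum_sing c i : i != p -> lin_sum c [set i] = c i.
Proof. by move=> ip; rewrite lin_sumE big_set1 /acoef (negbTE ip). Qed.


Definition CC : {set {set 'I_n}} := [set ~: [set j] | j in [set: 'I_n]].

Lemma CC_inj : {in [set: 'I_n] &, injective (fun j : 'I_n => ~: [set j])}.
Proof. by move=> i j _ _ /setC_inj /set1_inj. Qed.

Lemma card_C1 (j : 'I_n) : #|~: [set j]| = n.-1.
Proof. by rewrite cardsC1 card_ord. Qed.

Lemma C1_neq0 (j : 'I_n) : ~: [set j] != set0.
Proof. by rewrite -cards_eq0 card_C1; move: hn; case: n => [|[|m]]. Qed.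

Lemma C1_neqT (j : 'I_n) : ~: [set j] != setT.
Proof. by apply/eqP => e; have := in_setT j; rewrite -e inE set11. Qed.

Lemma CC_mem S : S \in CC -> exists j, S = ~: [set j].
Proof. by move=> /imsetP [j _ ->]; exists j. Qed.

Lemma CC_Bstar : Bstar R CC /\ balancing_weights CC (fun _ => (n.-1)%:R^-1 : R).
Proof.
have n1 : (n.-1)%:R != 0 :> R by rewrite pnatr_eq0; move: hn; case: n => [|[|m]].
have hw : balancing_weights CC (fun _ => (n.-1)%:R^-1 : R).
  split; first by move=> S _; rewrite invr_gt0 ltr0n; move: hn; case: n => [|[|m]].
  move=> i; rewrite big_mkcondr big_imset /=; last exact: CC_inj.
  rewrite -big_mkcondr (eq_bigl (mem (~: [set i]))) ?sumr_const ?card_C1.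
    by set c := (n.-1)%:R^-1; rewrite -mulr_natr /c mulVf.
  by move=> j /=; rewrite in_setT !inE eq_sym.
split => //; split; last first.
  apply/eqP => e; have : ~: [set p] \in CC by apply: imset_f; rewrite in_setT.
  by rewrite e in_set1 (negbTE (C1_neqT p)).
split.
  split; last by exists (fun _ => (n.-1)%:R^-1).
  by move=> S /CC_mem [j ->]; apply: C1_neq0.
move=> B' /properP [sub [S SC SnB']] [_ [mu [mu0 hmu]]].
have [k ek] := CC_mem SC; subst S.
have allk S : S \in B' -> k \in S.
  move=> SB; have [j ej] := CC_mem (subsetP sub _ SB); subst S.
  rewrite !inE; apply/negP => /eqP ejk; move: SnB'; by rewrite ejk SB.
have tot : \sum_(S in B') mu S = 1.
  rewrite -(hmu k); apply: eq_bigl => S; case SB0: (S \in B') => //=; by rewrite allk.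
have [e|[S SB]] := set_0Vmem B'.
  by move: tot; rewrite e big_set0 => /esym/eqP; rewrite oner_eq0.
have [j ej] := CC_mem (subsetP sub _ SB); subst S.
have := tot; rewrite (bigID (fun S => j \in S)) /= hmu.
rewrite (eq_bigl (pred1 (~: [set j]))) ?big_pred1_eq.
  by move=> h; have := mu0 _ SB; lra.
move=> S /=; apply/andP/eqP => [[SB' jS]|->]; last by rewrite SB !inE eqxx.
have [l el] := CC_mem (subsetP sub _ SB'); subst S.
by move: jS; rewrite !inE negbK => /eqP ->.
Qed.

Lemma deltaE S T : S != set0 -> S != setT -> delta R S T = (T == S)%:R.
Proof. by move=> S0 ST; rewrite ffunE; case: eqP => [->|] //=; rewrite ?S0 ?ST. Qed.

Lemma delta_restr S : delta R S set0 = 0 /\ delta R S setT = 0.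
Proof. by split; rewrite ffunE ?eqxx /= ?andbF. Qed.

Lemma phi_delta B lam S0 : S0 != set0 -> S0 != setT ->
  phi B lam (delta R S0) = if S0 \in B then lam S0 else 0.
Proof.
move=> S00 S0T; rewrite /phi; case: (boolP (S0 \in B)) => h.
  rewrite (bigD1 S0) //= deltaE // eqxx mulr1 big1 ?addr0 // => S /andP [_ SS].
  by rewrite deltaE // (negbTE SS) mulr0.
rewrite big1 // => S SB; rewrite deltaE //; case: eqP => [e|]; last by rewrite mulr0.
by move: h; rewrite -e SB.
Qed.

Lemma kill2 (g y z : vec) (a : R) B lam T : Ccone y -> Ccone z -> g = y + z ->
  Bstar R B -> balancing_weights B lam -> phi B lam g = 0 -> T \in B ->
  (forall S, S \in B -> S != T -> y S = a * g S) -> y T = a * g T.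
Proof.
move=> [_ hy] [_ hz] e hB hw pg TB hS.
have py : phi B lam y = 0.
  have h1 : phi B lam y <= 0 := hy B lam hB hw.
  have h2 : phi B lam z <= 0 := hz B lam hB hw.
  move: pg; rewrite e phiD; lra.
have : \sum_(S in B) lam S * (y S - a * g S) = 0.
  transitivity (phi B lam y - a * phi B lam g); last by rewrite py pg; ring.
  by rewrite /phi mulr_sumr -sumrB; apply: eq_bigr => S _; ring.
rewrite (bigD1 T) //= big1 ?addr0 => [|S /andP [SB ST]]; last by rewrite hS // subrr mulr0.
move/eqP; rewrite mulf_eq0 => /orP [/eqP l0|]; last by rewrite subr_eq0 => /eqP.
by have := (hw.1 T TB); rewrite l0 ltxx.
Qed.

Lemma PP_sing S T : S \in PP T -> S != T -> exists2 j, S = [set j] & j \notin T.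
Proof.
rewrite in_setU1 => /orP [/eqP -> |/imsetP [j jT ->]]; first by rewrite eqxx.
by move=> _; exists j => //; move: jT; rewrite inE.
Qed.

Lemma sing_card S : (1 < #|S|)%N -> forall j, S != [set j].
Proof. by move=> h j; apply/eqP => e; move: h; rewrite e cards1. Qed.

Lemma mem_neq_sing (i : 'I_n) T : i \in T -> T != [set i] -> (1 < #|T|)%N.
Proof.
move=> iT Ti; rewrite ltnNge; apply/negP => h.
have : #|T| != 0%N by rewrite cards_eq0; apply/set0Pn; exists i.
have : (#|T| == 1)%N -> False.
  move/cards1P => [k ek]; move: iT Ti; rewrite ek inE => /eqP ->; rewrite eqxx.
  done.
by move: h; case: #|T| => [|[|m]].
Qed.


Lemma subvE x y T : (x - y) T = x T - y T.
Proof. by rewrite !ffunE. Qed.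

Lemma w_lin i : i != p -> w R p i = lin_sum (fun j => (j == i)%:R).
Proof.
move=> ip; rewrite /lin_sum (bigD1 i) //= eqxx scale1r big1 ?addr0 //.
by move=> j /andP [_ /negbTE ->]; rewrite scale0r.
Qed.

Lemma Lin_w i : i != p -> Lin (@Ccone R n) (w R p i).
Proof. by move=> ip; rewrite w_lin //; apply: Lin_lin_sum. Qed.

Lemma r_player_E i : i != p -> r_player R p i = w R p i - delta R [set i].
Proof.
move=> ip; rewrite /r_player (negbTE ip); apply/ffunP => T.
case: (eqVneq T [set i]) => [->|Ti]; rewrite !ffunE.
  rewrite !in_set1 eqxx cards1 (negbTE (sum1_neq0 i)) (negbTE (set1_neqT i)) eq_sym (negbTE ip) /=.
  by rewrite eqxx /= !subr0 subrr.
rewrite (negbTE Ti) /= subr0; case iT: (i \in T) => //=.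
by rewrite (mem_neq_sing iT Ti) andbT.
Qed.

Lemma Ccone_ndelta S : S != set0 -> S != setT -> Ccone (- delta R S).
Proof.
move=> S0 ST; split.
  by have [h1 h2] := delta_restr S; split; rewrite ffunE ?h1 ?h2 oppr0.
move=> B lam hB hw; change (phi B lam (- delta R S) <= 0).
rewrite phiN phi_delta //; case: ifP => h; rewrite ?oppr0 // oppr_le0.
by apply: ltW; apply: hw.1.
Qed.

Lemma C0_ndelta S : S != set0 -> S != setT -> (forall j, j != p -> S != [set j]) ->
  C0 p (- delta R S).
Proof.
move=> S0 ST hS; split; first exact: Ccone_ndelta.
by move=> j jp; rewrite ffunE deltaE // eq_sym (negbTE (hS j jp)) oppr0.
Qed.

Lemma C0_r i : i != p -> C0 p (w R p i - delta R [set i]).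
Proof.
move=> ip; split.
  rewrite addrC; apply: Ccone_addLin; last exact: Lin_w.
  exact: Ccone_ndelta (sum1_neq0 i) (set1_neqT i).
move=> j jp; rewrite subvE w_val deltaE ?sum1_neq0 ?set1_neqT // !in_set1.
rewrite (inj_eq set1_inj) [p == j]eq_sym (negbTE jp) [j == i]eq_sym subr0.
by rewrite subrr.
Qed.

Lemma C0Z c x : 0 <= c -> C0 p x -> C0 p (c *: x).
Proof.
move=> c0 [hx hs]; split; first exact: CconeZ.
by move=> j jp; rewrite ffunE hs // /GRing.scale /= mulr0.
Qed.

Lemma notT T : T != set0 -> ~: T != setT.
Proof.
by move=> T0; apply/eqP => e'; move: T0; rewrite -(setCK T) e' setCT eqxx.
Qed.

Lemma half_gen q L : Lin (@Ccone R n) L -> C0 p (L - delta R [set q]) ->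
  (L - delta R [set q]) [set p] = -1 ->
  forall y z, C0 p y -> C0 p z -> L - delta R [set q] = y + z ->
  exists a, 0 <= a /\ y = a *: (L - delta R [set q]).
Proof.
move=> hL hg gp y z hy hz e.
set g := L - delta R [set q] in hg gp e *.
have [[[gr0 grT] _] gs] := hg.
have [[[yr0 yrT] _] ys] := hy.
have tight B lam : Bstar R B -> balancing_weights B lam -> [set q] \notin B ->
    phi B lam g = 0.
  move=> hB hw qB; rewrite /g phiB (Lin_phi hL hB hw).
  by rewrite phi_delta ?sum1_neq0 ?set1_neqT // (negbTE qB) subrr.
set a := - y [set p].
have sing j : y [set j] = a * g [set j].
  case: (eqVneq j p) => [->|jp]; first by rewrite gp /a; ring.
  by rewrite ys // gs // mulr0.
have K1 T : T != set0 -> T != setT -> q \in T -> T != [set q] -> y T = a * g T.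
  move=> T0 TT qT Tq; have [hB hw] := PP_Bstar T0 TT.
  apply: (kill2 (B := PP T) (lam := fun _ => 1) hy.1 hz.1 e hB hw).
  - apply: tight => //; apply/negP => /PP_mem /(_ (set11 q)); rewrite qT => e'.
    by move: Tq; rewrite -e' eqxx.
  - exact: setU11.
  - by move=> S SB ST; have [j -> _] := PP_sing SB ST; apply: sing.
have K2 T : T != set0 -> T != setT -> q \notin T -> ~: T != [set q] -> y T = a * g T.
  move=> T0 TT qT Tq; have [hB hw] := QQ_Bstar T0 TT.
  apply: (kill2 (B := QQ T) (lam := fun _ => 1) hy.1 hz.1 e hB hw).
  - apply: tight => //; rewrite in_setU1 in_set1 negb_or; apply/andP; split.
      by apply/eqP => e'; move: qT; rewrite -e' set11.
    by rewrite eq_sym.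
  - exact: setU11.
  - move=> S; rewrite in_setU1 in_set1 => /orP [/eqP ->|/eqP ->]; first by rewrite eqxx.
    move=> _; apply: K1 => //; [exact: setC_neq0 | exact: notT | by rewrite inE].
have K3 : y (~: [set q]) = a * g (~: [set q]).
  case: (eqVneq n 2%N) => [n2|n2].
    have : #|~: [set q]| == 1%N by rewrite card_C1 n2.
    by move/cards1P => [j ->]; apply: sing.
  have n3 : (2 < n)%N by rewrite ltn_neqAle eq_sym n2 hn.
  have [hB hw] := CC_Bstar.
  apply: (kill2 (B := CC) (lam := fun _ => (n.-1)%:R^-1) hy.1 hz.1 e hB hw).
  - apply: tight => //; apply/negP => /CC_mem [j ej].
    by have := card_C1 j; rewrite -ej cards1 => h; lia.
  - by apply: imset_f; rewrite in_setT.
  - move=> S /CC_mem [j ->] Sq.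
    have jq : j != q by apply/eqP => ejq; move: Sq; rewrite ejq eqxx.
    apply: K1; [exact: C1_neq0 | exact: C1_neqT | by rewrite !inE eq_sym | ].
    by apply/eqP => e'; have := card_C1 j; rewrite e' cards1 => h; lia.
have K T : y T = a * g T.
  case: (eqVneq T set0) => [->|T0]; first by rewrite yr0 gr0 mulr0.
  case: (eqVneq T setT) => [->|TT]; first by rewrite yrT grT mulr0.
  case: (boolP [exists j, T == [set j]]) => [/existsP [j /eqP ->]|ns]; first exact: sing.
  have Tns j : T != [set j].
    by apply/eqP => eT; move/negP: ns; apply; apply/existsP; exists j; rewrite eT.
  case: (boolP (q \in T)) => qT; first exact: K1.
  case: (eqVneq (~: T) [set q]) => [e'|Tq]; last exact: K2.
  by rewrite (_ : T = ~: [set q]) ?K3 // -e' setCK.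
exists a; split.
  have h := Ccone_PP hy.1 (sum1_neq0 p) (set1_neqT p).
  rewrite big1 ?addr0 in h; last by move=> j; rewrite !inE => jp; apply: ys.
  by rewrite /a oppr_ge0.
by apply/ffunP => T; rewrite ffunE K.
Qed.

Lemma half_delta S0 : S0 != setT -> (1 < #|S0|)%N ->
  forall y z, C0 p y -> C0 p z -> - delta R S0 = y + z ->
  exists a, 0 <= a /\ y = a *: (- delta R S0).
Proof.
move=> S0T hS0 y z hy hz e.
have S00 : S0 != set0 by rewrite -cards_eq0; move: hS0; case: #|S0|.
set g := - delta R S0 in e *.
have gE T : g T = - (T == S0)%:R by rewrite ffunE deltaE.
have [[[yr0 yrT] _] ys] := hy.
have tight B lam : Bstar R B -> balancing_weights B lam -> S0 \notin B ->
    phi B lam g = 0.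
  by move=> hB hw qB; rewrite /g phiN phi_delta // (negbTE qB) oppr0.
set a := - y S0.
have gsing j : g [set j] = 0.
  by rewrite gE eq_sym (negbTE (sing_card hS0 j)) oppr0.
have sing j : j != p -> y [set j] = a * g [set j].
  by move=> jp; rewrite ys // gsing mulr0.
have notin T : S0 != T -> S0 \notin PP T.
  move=> ST; apply/negP => h; have [j ej _] := PP_sing h ST.
  by move: (sing_card hS0 j); rewrite ej eqxx.
have allsing j : y [set j] = a * g [set j].
  case: (eqVneq j p) => [->|jp]; last exact: sing.
  have [hB hw] := PP_Bstar (sum1_neq0 p) (set1_neqT p).
  apply: (kill2 (B := PP [set p]) (lam := fun _ => 1) hy.1 hz.1 e hB hw).
  - apply: tight => //; apply: notin; exact: sing_card.
  - exact: setU11.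
  - move=> S SB ST; have [k -> kT] := PP_sing SB ST.
    by apply: sing; move: kT; rewrite in_set1.
have K T : y T = a * g T.
  case: (eqVneq T set0) => [->|T0]; first by rewrite yr0 /g ffunE (delta_restr S0).1 oppr0 mulr0.
  case: (eqVneq T setT) => [->|TT]; first by rewrite yrT /g ffunE (delta_restr S0).2 oppr0 mulr0.
  case: (eqVneq T S0) => [->|TS]; first by rewrite gE eqxx /= mulrN1 /a opprK.
  have [hB hw] := PP_Bstar T0 TT.
  apply: (kill2 (B := PP T) (lam := fun _ => 1) hy.1 hz.1 e hB hw).
  - by apply: tight => //; apply: notin; rewrite eq_sym.
  - exact: setU11.
  - by move=> S SB ST; have [j -> _] := PP_sing SB ST.
exists a; split.
  have h := Ccone_PP hy.1 S00 S0T.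
  rewrite big1 ?addr0 in h; last by move=> j _; rewrite allsing gsing mulr0.
  by rewrite /a oppr_ge0.
by apply/ffunP => T; rewrite ffunE K.
Qed.

Lemma ext_of_half g : C0 p g -> g != 0 ->
  (forall y z, C0 p y -> C0 p z -> g = y + z -> exists a, 0 <= a /\ y = a *: g) ->
  forall t, 0 < t -> extreme_ray (C0 p) (t *: g).
Proof.
move=> hg g0 H t t0; split; first by apply: C0Z => //; apply: ltW.
split; first by rewrite scaler_eq0 negb_or g0 gt_eqF.
move=> y z hy hz e.
have ti : 0 <= t^-1 by rewrite invr_ge0 ltW.
have e' : g = t^-1 *: y + t^-1 *: z.
  by rewrite -scalerDr -e scalerA mulVf ?scale1r // gt_eqF.
have [a [a0 ya]] := H _ _ (C0Z ti hy) (C0Z ti hz) e'.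
have [b [b0 zb]] := H _ _ (C0Z ti hz) (C0Z ti hy) (etrans e' (addrC _ _)).
exists a, b; split => //.
  by rewrite scalerA mulrC -scalerA -ya scalerA mulfV ?gt_eqF // scale1r.
by rewrite scalerA mulrC -scalerA -zb scalerA mulfV ?gt_eqF // scale1r.
Qed.


(* ---------- reduction to minimal balanced collections ---------- *)
Lemma sum_restr (B B2 : {set {set 'I_n}}) (P : pred {set 'I_n}) (f : {set 'I_n} -> R) :
  B2 \subset B -> (forall S, S \in B -> S \notin B2 -> f S = 0) ->
  \sum_(S in B | P S) f S = \sum_(S in B2 | P S) f S.
Proof.
move=> sub h; rewrite !big_mkcondr (big_setID B2) /= (setIidPr sub).
rewrite [X in _ + X]big1 ?addr0 // => S; rewrite inE => /andP [SB2 SB].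
by case: (P S) => //; apply: h.
Qed.

Lemma sum_restr0 (B B2 : {set {set 'I_n}}) (f : {set 'I_n} -> R) :
  B2 \subset B -> (forall S, S \in B -> S \notin B2 -> f S = 0) ->
  \sum_(S in B) f S = \sum_(S in B2) f S.
Proof.
move=> sub h; have := sum_restr predT sub h.
have e1 : \sum_(S in B | predT S) f S = \sum_(S in B) f S.
  by apply: eq_bigl => S; rewrite andbT.
have e2 : \sum_(S in B2 | predT S) f S = \sum_(S in B2) f S.
  by apply: eq_bigl => S; rewrite andbT.
by rewrite e1 e2.
Qed.

Lemma claimA x : Ccone x -> forall k B lam (c : R), (#|B| <= k)%N ->
  (forall S, S \in B -> (S != set0) && (S != setT)) -> (forall S, S \in B -> 0 < lam S) ->
  (forall i, \sum_(S in B | i \in S) lam S = c) -> phi B lam x <= 0.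
Proof.
move=> hx; elim=> [|k IH] B lam c hk hv hl hc.
  have -> : B = set0 by apply/eqP; rewrite -cards_eq0 -leqn0.
  by rewrite /phi big_set0.
case: (set_0Vmem B) => [->|[S1 S1B]]; first by rewrite /phi big_set0.
have /andP [S10 _] := hv _ S1B; have /set0Pn [i1 i1S] := S10.
have c0 : 0 < c.
  rewrite -(hc i1) (bigD1 S1) /=; last by rewrite S1B i1S.
  apply: (lt_le_trans (hl _ S1B)); rewrite lerDl; apply: sumr_ge0 => S /andP [/andP [SB _] _].
  exact: ltW (hl _ SB).
have hw : balancing_weights B (fun S => lam S / c).
  split; first by move=> S SB; apply: divr_gt0 => //; apply: hl.
  by move=> i; rewrite -mulr_suml hc mulfV // gt_eqF.
have balB : balanced R B.
  by split; [move=> S SB; case/andP: (hv S SB) | exists (fun S => lam S / c)].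
have BT : setT \notin B by apply/negP => h; have := hv _ h; rewrite eqxx andbF.
case: (classic (minimal_balanced R B)) => [hmin|hnmin].
  have hB : Bstar R B.
    split => //; apply/eqP => e; move: BT; rewrite e in_set1 eqxx //.
  have h : phi B (fun S => lam S / c) x <= 0 := hx.2 B _ hB hw.
  have e : phi B (fun S => lam S / c) x = c^-1 * phi B lam x.
    by rewrite /phi mulr_sumr; apply: eq_bigr => S _; rewrite mulrAC mulrC.
  by rewrite e pmulr_rle0 ?invr_gt0 in h.
have [B' [pB' balB']] : exists B', B' \proper B /\ balanced R B'.
  apply: NNPP => hno; apply: hnmin; split => // B' pB' bB'; apply: hno; by exists B'.
have [_ [mu [mu0 hmu]]] := balB'.
have sub := proper_sub pB'.
case: (set_0Vmem B') => [e|[S2 S2B']].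
  have := hmu i1; rewrite e big_pred0 => [/esym/eqP|S]; first by rewrite oner_eq0.
  by rewrite in_set0.
have [S0 S0B'0 Smin] := @arg_minP _ _ _ S2 (mem B') (fun S => lam S / mu S) S2B'.
have S0B' : S0 \in B' := S0B'0.
set t := lam S0 / mu S0.
have S0B := subsetP sub _ S0B'.
have t0 : 0 < t by apply: divr_gt0; [apply: hl | apply: mu0].
pose mu' S := if S \in B' then mu S else 0.
pose lam' S := lam S - t * mu' S.
have lam'0 S : S \in B -> 0 <= lam' S.
  move=> SB; rewrite /lam' /mu'; case: ifP => SB'; last by rewrite mulr0 subr0 ltW ?hl.
  have := Smin S SB'; rewrite -/t ler_pdivlMr ?mu0 // => h; lra.
have lS0 : lam' S0 = 0.
  by rewrite /lam' /mu' S0B' /t divfK ?subrr // gt_eqF ?mu0.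
pose B'' := [set S in B | 0 < lam' S].
have sub'' : B'' \subset B by apply/subsetP => S; rewrite inE => /andP [].
have pB'' : B'' \proper B.
  apply/properP; split => //; exists S0 => //; rewrite inE lS0 ltxx andbF //.
have k1 : (#|B'| <= k)%N by rewrite -ltnS (leq_trans (proper_card pB') hk).
have k2 : (#|B''| <= k)%N by rewrite -ltnS (leq_trans (proper_card pB'') hk).
have IH1 : phi B' mu x <= 0.
  apply: (IH B' mu 1) => //; first by move=> S SB'; apply: hv; apply: (subsetP sub).
have IH2 : phi B'' lam' x <= 0.
  apply: (IH B'' lam' (c - t)) => //.
  - by move=> S; rewrite inE => /andP [SB _]; apply: hv.
  - by move=> S; rewrite inE => /andP [].
  - move=> i; rewrite -(@sum_restr B B'' (fun S => i \in S) lam' sub'').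
      rewrite /lam' sumrB -mulr_sumr hc.
      have -> : \sum_(S in B | i \in S) mu' S = 1.
        rewrite (@sum_restr B B' (fun S => i \in S) mu' sub); last first.
          by move=> S _ SB'; rewrite /mu' (negbTE SB').
        by rewrite -(hmu i); apply: eq_bigr => S /andP [SB' _]; rewrite /mu' SB'.
      by rewrite mulr1.
    move=> S SB; rewrite inE SB /= => h; apply/eqP; rewrite eq_le lam'0 // andbT.
    by rewrite leNgt.
have -> : phi B lam x = phi B lam' x + t * phi B mu' x.
  by rewrite /phi mulr_sumr -big_split; apply: eq_bigr => S _ /=; rewrite /lam' mulrBl mulrA subrK.
have h1 : \sum_(S in B) lam' S * x S = phi B'' lam' x.
  apply: (sum_restr0 sub'') => S SB; rewrite inE SB /= => h; have : lam' S = 0.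
    by apply/eqP; rewrite eq_le lam'0 // andbT leNgt.
  by move=> ->; rewrite mul0r.
have h2 : \sum_(S in B) mu' S * x S = phi B' mu x.
  rewrite (sum_restr0 sub); last by move=> S _ SB'; rewrite /mu' (negbTE SB') mul0r.
  by apply: eq_bigr => S SB'; rewrite /mu' SB'.
have e1 : phi B lam' x = phi B'' lam' x := h1.
have e2 : phi B mu' x = phi B' mu x := h2.
rewrite e1 e2.
have := mulr_ge0_le0 (ltW t0) IH1; lra.
Qed.


Lemma sum_ind (A : {set 'I_n}) (j : 'I_n) : \sum_(i in A) ((i == j)%:R : R) = (j \in A)%:R.
Proof.
case: (boolP (j \in A)) => jA.
  rewrite (bigD1 j) //= eqxx big1 ?addr0 // => i /andP [_ /negbTE ->] //.
by rewrite big1 // => i iA; case: eqP => // e; move: jA; rewrite -e iA.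
Qed.

Lemma sum_indT (j : 'I_n) : \sum_i ((i == j)%:R : R) = 1.
Proof. by rewrite (bigD1 j) //= eqxx big1 ?addr0 // => i /negbTE ->. Qed.

Lemma core_exists x : Ccone x -> exists a : 'I_n -> R, \sum_i a i = 0 /\
  forall S, S != set0 -> S != setT -> x S <= \sum_(i in S) a i.
Proof.
move=> hx.
pose valid S := (S != set0) && (S != setT).
pose F (k : ({set 'I_n} + bool)%type) (v : ({ffun 'I_n -> R^o} * R^o)%type) : R :=
  match k with
  | inl A => if valid A then v.2 * x A - \sum_(i in A) v.1 i else 0
  | inr b => (if b then 1 else -1) * \sum_i v.1 i
  end.
pose g (v : ({ffun 'I_n -> R^o} * R^o)%type) : R := v.2.
have linsum (A : {pred 'I_n}) c (u v : ({ffun 'I_n -> R^o} * R^o)%type) :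
    \sum_(i in A) (c *: u + v).1 i = c * \sum_(i in A) u.1 i + \sum_(i in A) v.1 i.
  by rewrite mulr_sumr -big_split; apply: eq_bigr => i _ /=; rewrite !ffunE.
have HF k : linf (F k).
  case: k => [A|b] c u v /=.
    case: (valid A); last by rewrite mulr0 addr0.
    rewrite linsum /= /GRing.scale /=; ring.
  by rewrite linsum; ring.
have Hg : linf g by [].
have [[z [Fz gz]] | [lam [lam0 glam]]] :=
  @farkas R _ _ (index_enum ({set 'I_n} + bool)%type) F g (index_enum_uniq _) HF Hg.
  have s0 : \sum_i z.1 i = 0.
    have h1 := Fz (inr true) (mem_index_enum _).
    have h2 := Fz (inr false) (mem_index_enum _).
    rewrite /F /= in h1 h2; lra.
  exists (fun i => z.1 i / z.2); split; first by rewrite -mulr_suml s0 mul0r.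
  move=> S S0 ST; have h := Fz (inl S) (mem_index_enum _).
  rewrite /F /valid S0 ST /= in h.
  rewrite -mulr_suml ler_pdivlMr // mulrC; lra.
exfalso.
have e0 v : v.2 = \sum_(S : {set 'I_n}) lam (inl S) * F (inl S) v +
    (lam (inr true) * F (inr true) v + lam (inr false) * F (inr false) v).
  by have := glam v; rewrite /g => ->; rewrite big_sumType big_bool.
pose B := [set S | valid S && (0 < lam (inl S))].
pose m := lam (inr true) - lam (inr false).
have lamS S : lam (inl S) = 0 \/ 0 < lam (inl S).
  by have := lam0 (inl S); rewrite le_eqVlt => /orP [/eqP <-|lp]; [left | right].
have hsum j : \sum_(S in B | j \in S) lam (inl S) = m.
  have := e0 ([ffun i => (i == j)%:R], 0); rewrite /F /=.
  have -> : \sum_i [ffun i => ((i == j)%:R : R^o)] i = 1.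
    rewrite -[RHS](sum_indT j); apply: eq_bigr => i _; by rewrite ffunE.
  have -> : \sum_(S : {set 'I_n}) lam (inl S) *
      (if valid S then 0 * x S - \sum_(i in S) [ffun i => ((i == j)%:R : R^o)] i else 0)
      = \sum_(S : {set 'I_n}) (if (S \in B) && (j \in S) then - lam (inl S) else 0).
    apply: eq_bigr => S _.
    have -> : \sum_(i in S) [ffun i => ((i == j)%:R : R^o)] i = (j \in S)%:R.
      by rewrite -sum_ind; apply: eq_bigr => i _; rewrite ffunE.
    rewrite inE; case: (valid S) => /=; last by rewrite mulr0.
    case: (lamS S) => [->|->]; last by case: (j \in S) => /=; ring.
    by rewrite mul0r; case: (_ && _); rewrite ?oppr0.
  rewrite -big_mkcond sumrN /m => h; lra.
have hphi : phi B (fun S => lam (inl S)) x = 1.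
  have := e0 (0, 1); rewrite /F /=.
  have -> : \sum_(i : 'I_n) (0 : {ffun 'I_n -> R^o}) i = 0 by rewrite big1 // => i _; rewrite ffunE.
  rewrite !mulr0 !addr0 => ->; rewrite /phi big_mkcond /=; apply: eq_bigr => S _.
  rewrite inE; case: (valid S) => /=; last by rewrite mulr0.
  have -> : \sum_(i in S) (0 : {ffun 'I_n -> R^o}) i = 0 by rewrite big1 // => i _; rewrite ffunE.
  by case: (lamS S) => [->|->]; rewrite ?ltxx /=; ring.
have := @claimA x hx #|B| B (fun S => lam (inl S)) m (leqnn _).
rewrite hphi => h.
have : (1 : R) <= 0.
  apply: h => //; by move=> S; rewrite inE => /andP [].
by rewrite ler10.
Qed.


Lemma ext_gen x : extreme_ray (C0 p) x ->
  exists k, valid_index k /\ exists t : R, 0 < t /\ x = t *: gen R p k.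
Proof.
move=> [hx [x0 hext]].
have [hxc hxs] := hx.
have [[xr0 xrT] _] := hxc.
have [a [sa ha]] := core_exists hxc.
have aj j : j != p -> 0 <= a j.
  by move=> jp; have := ha _ (sum1_neq0 j) (set1_neqT j); rewrite big_set1 hxs.
have fin y z c g : C0 p y -> C0 p z -> x = y + z -> y = c *: g -> 0 < c -> g != 0 ->
    exists t, 0 < t /\ x = t *: g.
  move=> hy hz e yc c0 g0.
  have [al [be [al0 be0 yal zbe]]] := hext y z hy hz e.
  have aln : al != 0.
    apply/eqP => al00; move: yal; rewrite al00 scale0r yc => /eqP.
    by rewrite scaler_eq0 (negbTE g0) orbF gt_eqF.
  exists (al^-1 * c); split; first by rewrite mulr_gt0 // invr_gt0 lt_neqAle eq_sym aln.
  by rewrite -scalerA -yc yal scalerA mulVf // scale1r.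
case: (boolP [exists j, (j != p) && (0 < a j)]) => [/existsP [j /andP [jp aj0]] | hno].
  set r := w R p j - delta R [set j].
  have hr : C0 p r := C0_r jp.
  have [[[rr0 rrT] _] rs] := hr.
  set y := a j *: r.
  set z := x - y.
  have hy : C0 p y := C0Z (ltW aj0) hr.
  have hz : C0 p z.
    split; last first.
      by move=> k kp; rewrite /z /y subvE ffunE hxs // rs // /GRing.scale /= mulr0 subr0.
    pose c := fun k : 'I_n => (k == j)%:R : R.
    apply: (core_Ccone (a := fun i => a i - a j * acoef c i)).
    - by split; rewrite /z /y subvE ffunE ?xr0 ?rr0 ?xrT ?rrT /GRing.scale /= mulr0 subr0.
    - by rewrite sumrB -mulr_sumr acoef_sum mulr0 subr0.
    - move=> S S0 ST; rewrite sumrB -mulr_sumr -lin_sumE -(w_lin jp).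
      rewrite /z /y subvE ffunE /GRing.scale /= /r subvE deltaE ?sum1_neq0 ?set1_neqT //.
      case: (eqVneq S [set j]) => [->|Sj].
        rewrite hxs // w_val !in_set1 eqxx (eq_sym p) (negbTE jp) big_set1 /=.
        have := aj j jp; lra.
      rewrite /= subr0; have := ha S S0 ST; lra.
  have e : x = y + z by rewrite /z addrC subrK.
  have r0 : r != 0.
    apply/eqP => r0; have := congr1 (fun f : vec => f [set p]) r0.
    rewrite /r subvE w_val deltaE ?sum1_neq0 ?set1_neqT // !in_set1 eqxx (negbTE jp).
    rewrite (inj_eq set1_inj) eq_sym (negbTE jp) ffunE /=; lra.
  have [t [t0 xt]] := fin _ _ _ _ hy hz e erefl aj0 r0.
  by exists (inr j); split => //; exists t; split => //; rewrite /= r_player_E.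
have aj0 j : j != p -> a j = 0.
  move=> jp; apply/eqP; rewrite eq_le aj // andbT leNgt; apply/negP => h.
  by move/negP: hno; apply; apply/existsP; exists j; rewrite jp h.
have a0 i : a i = 0.
  case: (eqVneq i p) => [->|ip]; last exact: aj0.
  have s' : \sum_(j | j != p) a j = 0 by rewrite big1 // => j jp; exact: aj0.
  by have := sa; rewrite (bigD1 p) //= s' addr0.
have xle S : S != set0 -> S != setT -> x S <= 0.
  move=> S0 ST; have := ha S S0 ST.
  by have -> : \sum_(i in S) a i = 0 by rewrite big1 // => i _; exact: a0.
case: (boolP [exists T, x T != 0]) => [/existsP [T xT]|h]; last first.
  move/eqP: x0 => x0; exfalso; apply: x0; apply/ffunP => T; rewrite ffunE; apply/eqP.
  by move/existsPn: h => h; have := h T; rewrite negbK.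
have T0 : T != set0 by apply/eqP => e; move: xT; rewrite e xr0 eqxx.
have TT : T != setT by apply/eqP => e; move: xT; rewrite e xrT eqxx.
have xTlt : x T < 0 by rewrite lt_neqAle xT xle.
have hsing j : j != p -> T != [set j].
  by move=> jp; apply/eqP => e; move: xT; rewrite e hxs // eqxx.
set g := - delta R T.
have hg : C0 p g := C0_ndelta T0 TT hsing.
set y := (- x T) *: g.
set z := x - y.
have hy : C0 p y by apply: C0Z => //; rewrite oppr_ge0 ltW.
have hz : C0 p z.
  split; last first.
    move=> k kp; rewrite /z /y subvE ffunE hxs // /g ffunE deltaE // eq_sym.
    by rewrite (negbTE (hsing k kp)) /GRing.scale /= oppr0 mulr0 subr0.
  apply: (core_Ccone (a := fun _ => 0)).
  - by split; rewrite /z /y subvE ffunE ?xr0 ?xrT /g ffunE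
         ?(delta_restr T).1 ?(delta_restr T).2 /GRing.scale /= oppr0 mulr0 subr0.
  - by rewrite big1.
  - move=> S S0 ST; rewrite big1 // /z /y subvE ffunE /g ffunE deltaE // /GRing.scale /=.
    case: (eqVneq S T) => [->|ST']; first by rewrite /= mulr1n; lra.
    by rewrite /= mulr0n oppr0 mulr0 subr0; apply: xle.
have e : x = y + z by rewrite /z addrC subrK.
have g0 : g != 0.
  apply/eqP => g0; have := congr1 (fun f : vec => f T) g0.
  rewrite /g ffunE deltaE // eqxx ffunE /=; lra.
have xT0 : 0 < - x T by rewrite oppr_gt0.
have [t [t0 xt]] := fin _ _ _ _ hy hz e erefl xT0 g0.
case: (boolP (1 < #|T|)%N) => hT.
  by exists (inl T); split; [rewrite /= hT TT | exists t].
have : #|T| == 1%N.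
  move: hT; rewrite -leqNgt; have : #|T| != 0%N by rewrite cards_eq0.
  by case: #|T| => [|[|m]].
move/cards1P => [j ej].
have jp : j = p.
  by apply/eqP; apply/negPn/negP => jp; move: (hsing j jp); rewrite ej eqxx.
exists (inr p); split => //; exists t; split => //.
by rewrite /= /r_player eqxx xt /g ej jp.
Qed.


Lemma u_restr : u_last R p set0 = 0 /\ u_last R p setT = 0.
Proof. by split; rewrite ffunE ?in_set0 ?eqxx ?andbF. Qed.

Lemma phi_u B lam : Bstar R B -> balancing_weights B lam -> phi B lam (u_last R p) = 1.
Proof.
move=> hB hw; rewrite /phi.
transitivity (\sum_(S in B) (if p \in S then lam S else 0)).
  apply: eq_bigr => S SB; have /andP [_ ST] := Bstar_valid hB SB.
  by rewrite ffunE ST andbT; case: (p \in S); rewrite ?mulr1 ?mulr0.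
by rewrite -big_mkcondr hw.2.
Qed.

Lemma game_phi alpha x B lam : Bstar R B ->
  \sum_(S in B) lam S * game_of alpha x S = phi B lam x.
Proof.
move=> hB; apply: eq_bigr => S SB; have /andP [S0 ST] := Bstar_valid hB SB.
by rewrite ffunE (negbTE S0) (negbTE ST).
Qed.

Lemma ndelta_self (A : {set 'I_n}) : A != set0 -> A != setT -> (- delta R A) A = -1.
Proof. by move=> A0 AT; rewrite ffunE deltaE // eqxx. Qed.

Lemma main_sec (alpha : R) :
  (forall x : vec, BG alpha x <-> Ccone (x - alpha *: u_last R p)) /\
  (forall x : vec, Lin (@Ccone R n) x <->
     exists c : 'I_n -> R, x = \sum_(i | i != p) c i *: w R p i) /\
  (forall c : 'I_n -> R, \sum_(i | i != p) c i *: w R p i = 0 ->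
     forall i, i != p -> c i = 0) /\
  (forall x : vec, Ccone x ->
     exists l y, [/\ Lin (@Ccone R n) l, C0 p y & x = l + y]) /\
  (forall l y l' y' : vec, Lin (@Ccone R n) l -> C0 p y ->
     Lin (@Ccone R n) l' -> C0 p y' -> l + y = l' + y' -> l = l' /\ y = y') /\
  (forall x : vec, extreme_ray (C0 p) x <->
     exists k, valid_index k /\ exists t : R, 0 < t /\ x = t *: gen R p k).
Proof.
have [u0 uT] := u_restr.
split.
  move=> x; split => [[[x0 xT] hx]|[[x0 xT] hx]].
    split.
      by split; rewrite subvE ffunE ?x0 ?xT ?u0 ?uT /GRing.scale /= mulr0 subr0.
    move=> B lam hB hw; change (phi B lam (x - alpha *: u_last R p) <= 0).
    rewrite phiB phiZ phi_u // mulr1; have := hx B lam hB hw.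
    by rewrite game_phi //; lra.
  split.
    split.
      by move: x0; rewrite subvE ffunE u0 /GRing.scale /= mulr0 subr0.
    by move: xT; rewrite subvE ffunE uT /GRing.scale /= mulr0 subr0.
  move=> B lam hB hw; rewrite game_phi //.
  have h : phi B lam (x - alpha *: u_last R p) <= 0 := hx B lam hB hw.
  by rewrite phiB phiZ phi_u // mulr1 in h; lra.
split; first exact: Lin_iff.
split.
  move=> c hc i ip; rewrite -(lin_sum_sing c ip).
  by rewrite /lin_sum hc ffunE.
split.
  move=> x hx; set c := fun i => x [set i].
  exists (lin_sum c), (x - lin_sum c); split.
  - exact: Lin_lin_sum.
  - split; first exact: (Ccone_addLin hx (LinN (Lin_lin_sum c))).
    by move=> j jp; rewrite subvE lin_sum_sing // subrr.
  - by rewrite addrC subrK.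
split.
  move=> l y l' y' hl hy hl' hy' e.
  have hs j : j != p -> l [set j] = l' [set j].
    move=> jp; have := congr1 (fun f : vec => f [set j]) e.
    by rewrite !ffunE hy.2 // hy'.2 // !addr0.
  have hsp : l [set p] = l' [set p].
    have e1 := Lin_sum0 hl; have e2 := Lin_sum0 hl'.
    rewrite (bigD1 p) //= in e1; rewrite (bigD1 p) //= in e2.
    have : \sum_(j | j != p) l [set j] = \sum_(j | j != p) l' [set j].
      by apply: eq_bigr => j jp; apply: hs.
    lra.
  have hll : l = l'.
    apply/ffunP => T; rewrite (Lin_add hl) (Lin_add hl'); apply: eq_bigr => i _.
    by case: (eqVneq i p) => [->|ip]; [exact: hsp | exact: hs].
  by split => //; move: e; rewrite hll => /addrI.
move=> x; split; first exact: ext_gen.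
have L0 : Lin (@Ccone R n) (0 : vec).
  by have := Lin_lin_sum (fun _ => 0); rewrite /lin_sum big1 // => j _; rewrite scale0r.
move=> [[A|i] [hv [t [t0 ->]]]].
  move: hv => /= /andP [hA AT].
  have A0 : A != set0 by rewrite -cards_eq0; move: hA; case: #|A|.
  apply: ext_of_half => //.
  - by apply: C0_ndelta => // j _; apply: sing_card.
  - apply/eqP => e0; have := ndelta_self A0 AT; rewrite e0 ffunE => /eqP.
    by rewrite eq_sym oppr_eq0 oner_eq0.
  - exact: half_delta.
have sp j : j != p -> [set p] != [set j].
  by move=> jp; apply/eqP => /set1_inj ejp; move: jp; rewrite ejp eqxx.
case: (eqVneq i p) => [->|ip].
  rewrite /= /r_player eqxx -[- delta R [set p]]sub0r.
  have hC : C0 p (0 - delta R [set p]).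
    by rewrite sub0r; apply: C0_ndelta (sum1_neq0 p) (set1_neqT p) _ => j jp; apply: sp.
  have hv1 : (0 - delta R [set p]) [set p] = -1.
    by rewrite sub0r ndelta_self ?sum1_neq0 ?set1_neqT.
  apply: ext_of_half => //.
  - apply/eqP => e0; move: hv1; rewrite e0 ffunE => /eqP.
    by rewrite eq_sym oppr_eq0 oner_eq0.
  - exact: half_gen L0 hC hv1.
rewrite /= r_player_E //.
have hv1 : (w R p i - delta R [set i]) [set p] = -1.
  rewrite subvE w_val deltaE ?sum1_neq0 ?set1_neqT // !in_set1 eqxx (negbTE ip).
  by rewrite (inj_eq set1_inj) eq_sym (negbTE ip) /= sub0r subr0.
apply: ext_of_half => //.
- exact: C0_r.
- apply/eqP => e0; move: hv1; rewrite e0 ffunE => /eqP.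
  by rewrite eq_sym oppr_eq0 oner_eq0.
- exact: half_gen (Lin_w ip) (C0_r ip) hv1.
Qed.

End G.

Section Count.
Local Open Scope nat_scope.
Lemma cnt_valid (n : nat) : 1 < n ->
  #|[set k : {set 'I_n} + 'I_n | valid_index k]| = 2 ^ n - 2.
Proof.
move=> hn; rewrite -sum1_card big_sumType /=.
have -> : \sum_(i | inr i \in [set k : {set 'I_n} + 'I_n | valid_index k]) 1 = n.
  by rewrite (eq_bigl predT) ?sum1_card ?card_ord // => i; rewrite inE.
have tot : \sum_(A : {set 'I_n}) 1 = 2 ^ n.
  by rewrite sum1_card -cardsT -powersetT card_powerset cardsT card_ord.
rewrite (bigID (fun A : {set 'I_n} => 1 < #|A|)) /= in tot.
have e0 : \sum_(A : {set 'I_n} | ~~ (1 < #|A|)) 1 = 1 + n.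
  rewrite (bigID (fun A : {set 'I_n} => #|A| == 0)) /=.
  have -> : \sum_(A : {set 'I_n} | ~~ (1 < #|A|) && (#|A| == 0)) 1 = 1.
    rewrite (eq_bigl (fun A : {set 'I_n} => A \in [set B : {set 'I_n} | #|B| == 0]))
      ?sum1_card ?card_draws ?card_ord ?bin0 //.
    by move=> A; rewrite inE; case: #|A| => [|[|m]].
  have -> : \sum_(A : {set 'I_n} | ~~ (1 < #|A|) && ~~ (#|A| == 0)) 1 = n.
    rewrite (eq_bigl (fun A : {set 'I_n} => A \in [set B : {set 'I_n} | #|B| == 1]))
      ?sum1_card ?card_draws ?card_ord ?bin1 //.
    by move=> A; rewrite inE; case: #|A| => [|[|m]].
  by [].
have e1 : \sum_(A : {set 'I_n} | 1 < #|A|) 1 =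
    \sum_(A : {set 'I_n} | (1 < #|A|) && (A != setT)) 1 + 1.
  rewrite (bigD1 setT) /=; last by rewrite cardsT card_ord.
  by rewrite addnC; congr (_ + _).
have e2 : \sum_(A | inl A \in [set k : {set 'I_n} + 'I_n | valid_index k]) 1 =
    \sum_(A : {set 'I_n} | (1 < #|A|) && (A != setT)) 1.
  by apply: eq_bigl => A; rewrite inE.
rewrite e2; move: tot; rewrite e0 e1.
have h2 : 2 ^ 1 <= 2 ^ n by rewrite leq_exp2l // ltnW.
rewrite expn1 in h2; lia.
Qed.
End Count.

Theorem theorem6 (R : realType) (n : nat) (hn : (1 < n)%N) (alpha : R) :
  let p := lastp hn in
  (* BG_alpha(n) = alpha u_{n} + C_alpha(n) *)
  (forall x : vec R n, BG alpha x <-> Ccone (x - alpha *: u_last R p)) /\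
  (* the lineality space is spanned by the linearly independent w_1..w_{n-1} *)
  (forall x : vec R n, Lin (@Ccone R n) x <->
     exists c : 'I_n -> R, x = \sum_(i | i != p) c i *: w R p i) /\
  (forall c : 'I_n -> R, \sum_(i | i != p) c i *: w R p i = 0 ->
     forall i, i != p -> c i = 0) /\
  (* C_alpha(n) = Lin(C_alpha(n)) (+) C^0_alpha(n) *)
  (forall x : vec R n, Ccone x ->
     exists l y, [/\ Lin (@Ccone R n) l, C0 p y & x = l + y]) /\
  (forall l y l' y' : vec R n, Lin (@Ccone R n) l -> C0 p y ->
     Lin (@Ccone R n) l' -> C0 p y' -> l + y = l' + y' -> l = l' /\ y = y') /\
  (* the extremal rays of C^0 are exactly those of r_S (|S|>1, S <> N),
     r_i (i <> n) and r_n *)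
  (forall x : vec R n, extreme_ray (C0 p) x <->
     exists k, valid_index k /\ exists t : R, 0 < t /\ x = t *: gen R p k) /\
  (* counting: (2^n - n - 2) + n rays of C^0, plus 2n-2 rays of the lineality space *)
  #|[set k : {set 'I_n} + 'I_n | valid_index k]| = (2 ^ n - 2)%N /\
  (2 * (n - 1) + #|[set k : {set 'I_n} + 'I_n | valid_index k]| = 2 ^ n + 2 * n - 4)%N.
Proof.
move=> p.
have [h1 [h2 [h3 [h4 [h5 h6]]]]] := main_sec p hn alpha.
have hc := cnt_valid hn.
do 6 (split => //).
rewrite hc.
have h2n : (2 ^ 1 <= 2 ^ n)%N by rewrite leq_exp2l // ltnW.
rewrite expn1 in h2n; lia.
Qed.
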